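(* Let $G$ be a finite abstract simplicial complex such that all unit spheres $S(x)$, $x\in G$, have the same Euler characteristic $w(S(x))=c$. Then either $w(G)=0$ or $w(S(x))=0$ for all $x \in G$.
   Context: A finite abstract simplicial complex $G$ is a finite set of non-empty finite sets closed under taking non-empty subsets. For $x\in G$, $w(x)=(-1)^{|x|-1}$, and for $A\subset G$, $w(A)=\sum_{y\in A}w(y)$ (Euler characteristic). For $x\in G$: $U(x)=\{y\in G: x\subset y\}$, $B(x)=\{y\in G : y\subset z \text{ for some } z\in U(x)\}$ (the closure of $U(x)$ in the topology with basis the sets $U(x)$), and the unit sphere $S(x)=B(x)\setminus U(x)$. *)

(* Defs.v *)
From mathcomp Require Import all_boot all_order all_algebra.
Set Implicit Arguments. Unset Strict Implicit. Unset Printing Implicit Defensive.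
Import GRing.Theory Num.Theory.
Local Open Scope ring_scope.

Definition is_complex (T : finType) (G : {set {set T}}) : Prop :=
  (forall x, x \in G -> x != set0) /\
  (forall x y : {set T}, x \in G -> y \subset x -> y != set0 -> y \in G).

Definition wsimp (T : finType) (x : {set T}) : int := (-1) ^+ (#|x|.-1).

Definition wset (T : finType) (A : {set {set T}}) : int :=
  \sum_(y in A) wsimp y.

Definition Ustar (T : finType) (G : {set {set T}}) (x : {set T}) : {set {set T}} :=
  [set y in G | x \subset y].

Definition Bclos (T : finType) (G : {set {set T}}) (x : {set T}) : {set {set T}} :=
  [set y in G | [exists z in Ustar G x, y \subset z]].

Definition Sphere (T : finType) (G : {set {set T}}) (x : {set T}) : {set {set T}} :=
  Bclos G x :\: Ustar G x.

(* Main.v *)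
Require Import Defs.
From mathcomp Require Import all_boot all_order all_algebra.
Set Implicit Arguments. Unset Strict Implicit. Unset Printing Implicit Defensive.
Import GRing.Theory Num.Theory.
Local Open Scope ring_scope.

Definition tog (T : finType) (v : T) (y : {set T}) : {set T} :=
  if v \in y then y :\ v else v |: y.

Lemma togK (T : finType) (v : T) : involutive (tog v).
Proof.
move=> y; rewrite /tog; case: (boolP (v \in y)) => vy.
  by rewrite !inE eqxx /= setD1K.
by rewrite setU11 setU1K.
Qed.

Lemma tog_sign (T : finType) (v : T) (y : {set T}) :
  (-1) ^+ #|tog v y| = - ((-1) ^+ #|y|) :> int.
Proof.
rewrite /tog; case: ifP => vy.
  by rewrite [in RHS](cardsD1 v) vy /= exprS mulN1r opprK.
by rewrite cardsU1 vy /= exprS mulN1r.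
Qed.

Lemma invol_sum (T : finType) (v : T) (P : pred {set T}) :
  (forall y, P y -> P (tog v y)) ->
  \sum_(y | P y) (-1) ^+ #|y| = 0 :> int.
Proof.
move=> HP.
set S := \sum_(y | P y) _.
have E : S = - S.
  rewrite {1}/S (reindex_inj (can_inj (togK v))) /=.
  rewrite (eq_bigl P); last first.
    move=> y /=; apply/idP/idP => H; last exact: HP.
    by have := HP _ H; rewrite togK.
  by rewrite /S -sumrN; apply: eq_bigr => y _; rewrite tog_sign.
have : S + S = 0 by rewrite {1}E addNr.
by move/eqP; rewrite -mulr2n -mulr_natr mulf_eq0 pnatr_eq0 orbF => /eqP.
Qed.

Lemma key (T : finType) (v : T) (P : pred {set T}) :
  P set0 -> (forall y, P y -> P (tog v y)) ->
  \sum_(y | P y && (y != set0)) wsimp y = 1.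
Proof.
move=> P0 HP; have := invol_sum HP.
rewrite (bigD1 set0) //= cards0 expr0.
have -> : \sum_(i | P i && (i != set0)) (-1) ^+ #|i| =
          - \sum_(y | P y && (y != set0)) wsimp y :> int.
  rewrite -sumrN; apply: eq_bigr => y /andP [_ y0].
  rewrite /wsimp; have : (0 < #|y|)%N by rewrite card_gt0.
  by case: #|y| => // n _ /=; rewrite exprS mulN1r.
by move/eqP; rewrite subr_eq0 => /eqP <-.
Qed.

Theorem mainTheorem6 (T : finType) (G : {set {set T}}) (c : int) :
  is_complex G ->
  (forall x, x \in G -> wset (Sphere G x) = c) ->
  wset G = 0 \/ (forall x, x \in G -> wset (Sphere G x) = 0).
Proof.
move=> [Gne Gcl] Hc.
have HB : forall x, x \in G -> wset (Bclos G x) = 1.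
  move=> x xG; have /set0Pn [v vx] := Gne x xG.
  rewrite /wset -(key (v := v) (P := fun y => (y \in Bclos G x) || (y == set0))).
  - apply: eq_bigl => y; case: (boolP (y \in Bclos G x)) => /= yB.
      apply/esym/negP => /eqP y0.
      by move: yB; rewrite inE y0 => /andP [/Gne]; rewrite eqxx.
    by case: eqP.
  - by rewrite eqxx orbT.
  - move=> y /orP [yB|/eqP ->].
      move: yB; rewrite inE => /andP [yG /existsP [z /andP [zU yz]]].
      have [zG xz] : z \in G /\ x \subset z by move: zU; rewrite inE => /andP [].
      have tz : tog v y \subset z.
        rewrite /tog; case: ifP => _.
          exact: subset_trans (subD1set _ _) yz.
        by rewrite subUset sub1set (subsetP xz) // yz.
      case: (eqVneq (tog v y) set0) => [->|t0]; first by rewrite ?eqxx orbT.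
      apply/orP; left; rewrite inE (Gcl _ _ zG tz t0) /=.
      by apply/existsP; exists z; rewrite zU.
    apply/orP; left; rewrite /tog in_set0 setU0 inE.
    have v1 : [set v] \subset x by rewrite sub1set.
    rewrite (Gcl _ _ xG v1) ?set11_ne0 //=; last by apply/set0Pn; exists v; rewrite set11.
    by apply/existsP; exists x; rewrite inE xG subxx.
have HW : forall y, y \in G -> \sum_(x in G | x \subset y) wsimp x = 1.
  move=> y yG; have /set0Pn [v vy] := Gne y yG.
  rewrite -(key (v := v) (P := fun x => x \subset y)) ?sub0set //.
    apply: eq_bigl => x; case: (boolP (x \subset y)) => xy; last by rewrite andbF.
    rewrite andbT; apply/idP/idP; first by move/Gne.
    by move=> x0; exact: Gcl yG xy x0.
  move=> x xy; rewrite /tog; case: ifP => _.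
    exact: subset_trans (subD1set _ _) xy.
  by rewrite subUset sub1set vy xy.
have HU : \sum_(x in G) wsimp x * wset (Ustar G x) = wset G.
  rewrite /wset.
  transitivity (\sum_(x in G) \sum_(y | (y \in G) && (x \subset y)) wsimp x * wsimp y).
    apply: eq_bigr => x _; rewrite mulr_sumr; apply: eq_bigl => y; by rewrite inE.
  rewrite (exchange_big_dep (fun y => y \in G)); last by move=> i j _ /andP [].
  apply: eq_bigr => y yG.
  rewrite -[RHS]mulr1 -(HW y yG) mulr_sumr.
  rewrite (eq_bigl (fun x => (x \in G) && (x \subset y))); last first.
    by move=> x; rewrite yG.
  by apply: eq_bigr => x _; rewrite mulrC.
have HS : \sum_(x in G) wsimp x * wset (Sphere G x) = 0.
  have -> : \sum_(x in G) wsimp x * wset (Sphere G x) =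
            \sum_(x in G) (wsimp x - wsimp x * wset (Ustar G x)).
    apply: eq_bigr => x xG.
    have : wset (Bclos G x) = wset (Ustar G x) + wset (Sphere G x).
      have E : Bclos G x :&: Ustar G x = Ustar G x.
        apply/setIidPr/subsetP => y; rewrite !inE => /andP [yG xy].
        by rewrite yG; apply/existsP; exists y; rewrite !inE yG xy subxx.
      by rewrite /wset /Sphere (big_setID (Ustar G x)) /= E.
    move=> E; have -> : wset (Sphere G x) = 1 - wset (Ustar G x) by rewrite -(HB x xG) E addrC addKr.
    by rewrite mulrBr mulr1.
  by rewrite sumrB HU /wset subrr.
have : c * wset G = 0.
  rewrite -HS {1}/wset mulr_sumr; apply: eq_bigr => x xG.
  by rewrite Hc // mulrC.
move/eqP; rewrite mulf_eq0 => /orP [/eqP c0|/eqP ->]; last by left.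
by right => x xG; rewrite Hc.
Qed.
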